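(* Let $t\ge1$ be an integer. The affine transformation $(x,y)\mapsto(x+H_t,\ y+x+H_t/2)$ maps the lattice $\Lambda_t=(\tfrac t2+\mathbb Z)\times\mathbb Z$ onto itself, maps the grid parabola $P_t$ onto itself, and maps the reference parabola $\Pi_t\colon y=x^2/(2H_t)$, as well as every vertical translate of $\Pi_t$, onto itself.
   Context: Fix an integer $t\ge1$. Let $S_t$ be the set of rational numbers $s$ which, written in lowest terms as $s=a/b$ with $a\in\mathbb Z$ and $b$ a positive integer, satisfy $b\le t$. For $s=a/b\in S_t$ let $v_s=\lfloor t/b\rfloor\,(b,a)$, and $V_t=\{v_s:s\in S_t\}$. The grid parabola $P_t$ is the infinite convex polygonal chain obtained by concatenating the vectors of $V_t$ in order of increasing slope, positioned so that the edge given by $(t,0)$ goes from $(-t/2,0)$ to $(t/2,0)$. $H_t=\sum_{1\le y\le x\le t,\ \gcd(x,y)=1}\lfloor t/x\rfloor\,x$. *)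

(* Defs.v *)
From mathcomp Require Import all_boot all_order all_algebra.
Unset Printing Implicit Defensive.
Import Order.TTheory GRing.Theory Num.Theory.
Local Open Scope ring_scope.

Definition inS (t : nat) (s : rat) : bool := denq s <= t%:Z.

Definition vcoef (t : nat) (s : rat) : nat := (t %/ `|denq s|)%N.
Definition vx (t : nat) (s : rat) : rat := (vcoef t s)%:R * (denq s)%:~R.
Definition vy (t : nat) (s : rat) : rat := (vcoef t s)%:R * (numq s)%:~R.

(* duplicate-free list of all a/b with 1 <= b <= t and -K <= a <= K;
   it contains every element of S_t whose numerator has absolute value <= K *)
Definition Sbox (t K : nat) : seq rat :=
  undup [seq ((k%:Z - K%:Z)%:~R / b%:R : rat) | b <- iota 1 t, k <- iota 0 (2 * K).+1].

(* bound on |numerator| of elements of S_t lying between 0 and s *)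
Definition bnd (t : nat) (s : rat) : nat := (t * `|numq s|)%N.

(* starting point of the edge v_s of the grid parabola P_t:
   the edge v_0 = (t,0) goes from (-t/2,0) to (t/2,0); edges of positive slope
   follow in increasing slope after (t/2,0), edges of negative slope precede
   (-t/2,0) in increasing slope. *)
Definition startx (t : nat) (s : rat) : rat :=
  if 0 < s then t%:R / 2 + \sum_(u <- Sbox t (bnd t s) | (0 < u) && (u < s)) vx t u
  else - (t%:R / 2) - \sum_(u <- Sbox t (bnd t s) | (s <= u) && (u < 0)) vx t u.
Definition starty (t : nat) (s : rat) : rat :=
  if 0 < s then \sum_(u <- Sbox t (bnd t s) | (0 < u) && (u < s)) vy t u
  else - \sum_(u <- Sbox t (bnd t s) | (s <= u) && (u < 0)) vy t u.

Definition gridP (R : realFieldType) (t : nat) (p : R * R) : Prop :=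
  exists s : rat, inS t s /\
    exists2 l : R, (0 <= l <= 1) &
      p = (ratr (startx t s) + l * ratr (vx t s), ratr (starty t s) + l * ratr (vy t s)).

Definition Ht (t : nat) : nat :=
  (\sum_(1 <= x < t.+1) \sum_(1 <= y < x.+1 | coprime x y) (t %/ x) * x)%N.

Definition lattice (R : realFieldType) (t : nat) (p : R * R) : Prop :=
  exists m n : int, p = (t%:R / 2 + m%:~R, n%:~R).

Definition refpar (R : realFieldType) (t : nat) (c : R) (p : R * R) : Prop :=
  p.2 = p.1 ^+ 2 / (2 * (Ht t)%:R) + c.

Definition Tmap (R : realFieldType) (t : nat) (p : R * R) : R * R :=
  (p.1 + (Ht t)%:R, p.2 + p.1 + (Ht t)%:R / 2).

Definition maps_onto {T : Type} (f : T -> T) (A : T -> Prop) : Prop :=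
  (forall p, A p -> A (f p)) /\ (forall q, A q -> exists2 p, A p & f p = q).

(* Main.v *)
Require Import Defs.
From mathcomp Require Import all_boot all_order all_algebra.
From mathcomp Require Import ring lra zify.
Import Order.TTheory GRing.Theory Num.Theory.
Local Open Scope ring_scope.

Lemma shiftq (u : rat) (k : int) :
  numq (u + k%:~R) = numq u + k * denq u /\ denq (u + k%:~R) = denq u.
Proof.
have d0 : (denq u)%:~R != 0 :> rat by rewrite intr_eq0 denq_neq0.
have E : u + k%:~R = (numq u + k * denq u)%:~R / (denq u)%:~R.
  by rewrite intrD intrM numqE; field.
have cp : coprime `|numq u + k * denq u| `|denq u|.
  have := coprime_num_den u; rewrite -!coprimezE /coprimez => h.
  by rewrite addrC gcdzC gcdzMDl gcdzC.
rewrite E coprimeq_num // coprimeq_den // denq_eq0 /=.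
rewrite gtr0_sg ?denq_gt0 // mul1r; split => //.
by rewrite gtr0_norm ?denq_gt0.
Qed.

Lemma negq_den (u : rat) : numq (- u) = - numq u /\ denq (- u) = denq u.
Proof. by rewrite numqN denqN. Qed.

Lemma vx_shift t u (k : int) : vx t (u + k%:~R) = vx t u.
Proof. by rewrite /vx /vcoef (shiftq u k).2. Qed.
Lemma vy_shift t u (k : int) : vy t (u + k%:~R) = vy t u + k%:~R * vx t u.
Proof. rewrite /vy /vx /vcoef (shiftq u k).2 (shiftq u k).1 intrD intrM; ring. Qed.
Lemma inS_shift t u (k : int) : inS t (u + k%:~R) = inS t u.
Proof. by rewrite /inS (shiftq u k).2. Qed.
Lemma vx_neg t u : vx t (- u) = vx t u.
Proof. by rewrite /vx /vcoef denqN. Qed.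
Lemma vy_neg t u : vy t (- u) = - vy t u.
Proof. rewrite /vy /vcoef denqN numqN intrN; ring. Qed.
Lemma inS_neg t u : inS t (- u) = inS t u.
Proof. by rewrite /inS denqN. Qed.

Lemma numq_abs (u : rat) : (`|numq u|)%:~R = `|u| * (denq u)%:~R.
Proof.
rewrite intr_norm numqE normrM.
by rewrite [`|(denq u)%:~R|]ger0_norm // ler0z ltW // denq_gt0.
Qed.

Lemma mem_Sbox t K u : (u \in Sbox t K) = inS t u && (`|numq u| <= K%:Z).
Proof.
apply/idP/idP.
  rewrite /Sbox mem_undup => /allpairsP [[b k] [hb hk ->]].
  rewrite !mem_iota /= in hb hk.
  set n := (k%:Z - K%:Z).
  have bn0 : (b%:Z != 0) by rewrite -lt0n; lia.
  have E : (n%:~R / b%:R : rat) = fracq (n, b%:Z) by rewrite fracqE.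
  have hd := den_fracq (n, b%:Z); rewrite /= bn0 in hd.
  have hle : (denq (n%:~R / b%:R) <= b%:Z) by rewrite E hd lez_nat leq_div.
  apply/andP; split.
    rewrite /inS (le_trans hle) // lez_nat; lia.
  have hpos : (0 < b%:R :> rat) by rewrite ltr0n; lia.
  rewrite -(ler_int rat) numq_abs.
  have hn : `|n| <= K%:Z by rewrite /n; lia.
  apply: (@le_trans _ _ (`|n%:~R / b%:R : rat| * b%:R)).
    apply: ler_wpM2l => //; rewrite -[b%:R]/((b%:Z)%:~R : rat) ler_int //.
  rewrite normrM normfV (gtr0_norm hpos) divfK ?gt_eqF //.
  by rewrite -intr_norm ler_int.
case/andP => hS hK.
rewrite /Sbox mem_undup; apply/allpairsP.
exists (absz (denq u), absz (numq u + K%:Z)).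
have hd := denq_gt0 u.
split.
- rewrite mem_iota /=; rewrite /inS in hS; lia.
- rewrite mem_iota /=; lia.
have -> : ((absz (numq u + K%:Z))%:Z - K%:Z) = numq u by lia.
have -> : ((absz (denq u))%:R : rat) = (denq u)%:~R.
  by rewrite -[(absz _)%:R]/(((absz (denq u))%:Z)%:~R : rat) gez0_abs // ltW.
by rewrite divq_num_den.
Qed.

Definition gm (e : bool) (k : int) (u : rat) : rat := (if e then - u else u) + k%:~R.
Definition gmi (e : bool) (k : int) : int := if e then k else - k.

Lemma gmK e k : cancel (gm e k) (gm e (gmi e k)).
Proof. by case: e => u; rewrite /gm /gmi ?rmorphN; ring. Qed.
Lemma gmKV e k : cancel (gm e (gmi e k)) (gm e k).
Proof. by case: e => u; rewrite /gm /gmi ?rmorphN; ring. Qed.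

Lemma inS_gm t e k u : inS t (gm e k u) = inS t u.
Proof. by rewrite /gm inS_shift; case: e; rewrite ?inS_neg. Qed.

Lemma reidx t e k (P Q : pred rat) (f : rat -> rat) K1 K2 :
  (forall u, Q (gm e k u) = P u) ->
  (forall u, inS t u -> P u -> `|numq u| <= K2%:Z) ->
  (forall u, inS t u -> Q u -> `|numq u| <= K1%:Z) ->
  \sum_(u <- Sbox t K1 | Q u) f u = \sum_(u <- Sbox t K2 | P u) f (gm e k u).
Proof.
move=> hPQ h2 h1.
rewrite -big_filter -[RHS]big_filter -(big_map (gm e k) xpredT f).
apply: perm_big; apply: uniq_perm.
- by rewrite filter_uniq // undup_uniq.
- by rewrite map_inj_uniq ?filter_uniq ?undup_uniq //; apply: can_inj (gmK e k).
move=> v; rewrite mem_filter mem_Sbox; apply/idP/mapP.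
  case/andP=> hQ /andP [hS _]; exists (gm e (gmi e k) v); last by rewrite gmKV.
  have hP : P (gm e (gmi e k) v) by rewrite -hPQ gmKV.
  have hS' : inS t (gm e (gmi e k) v) by rewrite inS_gm.
  by rewrite mem_filter mem_Sbox hP hS' h2.
case=> u; rewrite mem_filter mem_Sbox => /andP [hP /andP [hS _]] ->.
have hS' : inS t (gm e k u) by rewrite inS_gm.
by rewrite hPQ hP hS' h1 // hPQ.
Qed.

Lemma reK t (P : pred rat) (f : rat -> rat) K1 K2 :
  (forall u, inS t u -> P u -> `|numq u| <= K2%:Z) ->
  (forall u, inS t u -> P u -> `|numq u| <= K1%:Z) ->
  \sum_(u <- Sbox t K1 | P u) f u = \sum_(u <- Sbox t K2 | P u) f u.
Proof.
move=> h2 h1; rewrite (@reidx t false 0 P P f K1 K2) //.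
  by apply: eq_bigr => u _; rewrite /gm addr0.
by move=> u; rewrite /gm addr0.
Qed.

Lemma bnd_gen t u (M : nat) : inS t u -> `|u| <= M%:R -> `|numq u| <= (t * M)%N%:Z.
Proof.
move=> hS hu; rewrite -(ler_int rat) numq_abs.
have hd : (denq u)%:~R <= t%:R :> rat by rewrite -[t%:R]/((t%:Z)%:~R : rat) ler_int.
have hd0 : 0 <= (denq u)%:~R :> rat by rewrite ler0z ltW // denq_gt0.
rewrite -[((t * M)%N%:Z)%:~R]/(((t * M)%N)%:R : rat) natrM mulrC.
by apply: ler_pM.
Qed.

Lemma absq_le (a : rat) : `|a| <= (absz (numq a))%:R.
Proof.
rewrite -[(absz (numq a))%:R]/(((absz (numq a))%:Z)%:~R : rat) abszE numq_abs.
have h1 : 1 <= (denq a)%:~R :> rat by rewrite -[1]/((1:int)%:~R : rat) ler_int; have := denq_gt0 a; lia.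
by rewrite ler_peMr.
Qed.

Definition B t (a c : rat) : nat := (t * (absz (numq a) + absz (numq c)))%N.
Definition J t (f : rat -> rat) (a c : rat) : rat :=
  \sum_(u <- Sbox t (B t a c) | (a <= u) && (u < c)) f u.

Lemma bndI t a c u : inS t u -> a <= u <= c -> `|numq u| <= (B t a c)%:Z.
Proof.
move=> hS /andP [hau huc]; apply: bnd_gen => //.
have := absq_le a; have := absq_le c.
rewrite natrD.
case: (lerP 0 u) => hu.
  rewrite (ger0_norm hu) => hc ha.
  have : c <= `|c| by apply: ler_norm.
  have : 0 <= `|a| by [].
  lra.
rewrite (ltr0_norm hu) => hc ha.
have : - a <= `|a| by rewrite -normrN ler_norm.
have : 0 <= `|c| by [].
lra.
Qed.

Lemma J_ext t f g a c : (forall u, f u = g u) -> J t f a c = J t g a c.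
Proof. by move=> h; apply: eq_bigr => u _. Qed.

Lemma J_split t f a b c : a <= b -> b <= c -> J t f a c = J t f a b + J t f b c.
Proof.
move=> hab hbc; rewrite /J.
rewrite (@reK t _ f (B t a b) (B t a c)); last first.
  by move=> u hS /andP[h1 h2]; apply: bndI => //; rewrite h1 /= ltW.
  by move=> u hS /andP[h1 h2]; apply: bndI => //; rewrite h1 /= ltW // (lt_le_trans h2).
rewrite [X in _ = _ + X](@reK t _ f (B t b c) (B t a c)); last first.
  by move=> u hS /andP[h1 h2]; apply: bndI => //; rewrite h1 /= ltW.
  by move=> u hS /andP[h1 h2]; apply: bndI => //; rewrite (le_trans hab h1) /= ltW.
rewrite (bigID (fun u => u < b)) /=; congr (_ + _); apply: eq_bigl => u.
  by case: (ltP u b) => h; rewrite ?andbT ?andbF //= ?(lt_le_trans h hbc) ?andbT // andbC.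
case: (ltP u b) => h /=; last by rewrite (le_trans hab h) andbT.
by rewrite andbF.
Qed.

Lemma gm1 u : gm false 1 u = u + 1.
Proof. by rewrite /gm /= mulr1z. Qed.

Lemma J_shift t f a c : J t f (a + 1) (c + 1) = J t (fun u => f (u + 1)) a c.
Proof.
rewrite /J (@reidx t false 1 (fun u => (a <= u) && (u < c))
   (fun u => (a + 1 <= u) && (u < c + 1)) f (B t (a+1) (c+1)) (B t a c)).
- by apply: eq_bigr => u _; rewrite gm1.
- by move=> u; rewrite gm1 lerD2r ltrD2r.
- by move=> u hS /andP[h1 h2]; apply: bndI => //; rewrite h1 /= ltW.
- by move=> u hS /andP[h1 h2]; apply: bndI => //; rewrite h1 /= ltW.
Qed.

Lemma denq0 : denq 0 = 1. Proof. by []. Qed.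
Lemma numq0 : numq 0 = 0. Proof. by []. Qed.
Lemma vx0 t : vx t 0 = t%:R.
Proof. by rewrite /vx /vcoef denq0 /= divn1 mulr1. Qed.
Lemma vy0 t : vy t 0 = 0.
Proof. by rewrite /vy numq0 mulr0. Qed.

Definition Jo t (f : rat -> rat) (a c : rat) : rat :=
  \sum_(u <- Sbox t (B t a c) | (a < u) && (u < c)) f u.

Lemma J01 t f : (1 <= t)%N -> J t f 0 1 = f 0 + Jo t f 0 1.
Proof.
move=> ht; rewrite /J /Jo -big_filter (bigD1_seq 0).
- rewrite big_filter_cond; congr (_ + _); apply: eq_bigl => u.
  by case: (eqVneq u 0) => [->|hu]; rewrite ?ltxx ?andbF ?andbT // [0 < u]lt_def hu.

- rewrite mem_filter lexx ltr01 mem_Sbox /inS denq0 numq0 /=; lia.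
- by rewrite filter_uniq // undup_uniq.
Qed.

Lemma Jo_refl t : Jo t (vy t) 0 1 = Jo t (fun u => vx t u - vy t u) 0 1.
Proof.
rewrite /Jo (@reidx t true 1 (fun u => (0 < u) && (u < 1))
   (fun u => (0 < u) && (u < 1)) (vy t) (B t 0 1) (B t 0 1)).
- apply: eq_bigr => u _; rewrite /gm mulr1z.
  have := vy_shift t (- u) 1; rewrite mulr1z => ->.
  by rewrite vy_neg vx_neg mul1r addrC.
- move=> u; rewrite /gm mulr1z.
  by apply/andP/andP => -[h1 h2]; split; lra.
- by move=> u hS /andP[h1 h2]; apply: bndI => //; rewrite ltW //= ltW.
- by move=> u hS /andP[h1 h2]; apply: bndI => //; rewrite ltW //= ltW.
Qed.

Lemma Jvy01 t : (1 <= t)%N -> J t (vy t) 0 1 = (J t (vx t) 0 1 - t%:R) / 2.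
Proof.
move=> ht; rewrite !J01 // vy0 vx0 add0r.
have : Jo t (vy t) 0 1 = Jo t (vx t) 0 1 - Jo t (vy t) 0 1.
  by rewrite {1}Jo_refl /Jo sumrB.
lra.
Qed.

Definition A t f (s : rat) : rat := if 0 <= s then J t f 0 s else - J t f s 0.

Lemma J_nil t f a : J t f a a = 0.
Proof.
rewrite /J big1_seq // => u /andP[/andP[h1 h2] _].
by move: (le_lt_trans h1 h2); rewrite ltxx.
Qed.

Lemma J_add t f g a c : J t (fun u => f u + g u) a c = J t f a c + J t g a c.
Proof. by rewrite /J big_split. Qed.

Lemma A_diff t f a c : a <= c -> J t f a c = A t f c - A t f a.
Proof.
move=> hac; rewrite /A.
case: (lerP 0 a) => ha.
  rewrite (le_trans ha hac) (@J_split t f _ _ _ ha hac); ring.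
case: (lerP 0 c) => hc.
  rewrite (@J_split t f _ _ _ (ltW ha) hc); ring.
rewrite (@J_split t f _ _ _ hac (ltW hc)); ring.
Qed.

Lemma per_nat (F : rat -> rat) : (forall s, F (s + 1) = F s) ->
  forall s (n : nat), F (s + n%:R) = F s.
Proof.
move=> h s; elim => [|n IH]; first by rewrite addr0.
by rewrite -addn1 natrD addrA h.
Qed.

Lemma per_int (F : rat -> rat) : (forall s, F (s + 1) = F s) ->
  forall s (n : int), F (s + n%:~R) = F s.
Proof.
move=> h s [n|n]; first exact: per_nat.
rewrite NegzE -[LHS](@per_nat F h _ n.+1).
by rewrite -[(n.+1)%:R]/((n.+1)%:~R : rat) rmorphN /= subrK.
Qed.

Lemma per_frac (F : rat -> rat) : (forall s, F (s + 1) = F s) ->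
  (forall r, 0 <= r -> r < 1 -> F r = F 0) -> forall s, F s = F 0.
Proof.
move=> h h0 s; rewrite -(h0 (s - (Num.floor s)%:~R)).
- by rewrite -[in LHS](subrK ((Num.floor s)%:~R) s) per_int.
- by rewrite subr_ge0 Num.Theory.floor_le.
- have := Num.Theory.floorD1_gt s; rewrite rmorphD /= mulr1z; lra.
Qed.

Lemma P_const t s : J t (vx t) s (s + 1) = J t (vx t) 0 1.
Proof.
apply: (@per_frac (fun s => J t (vx t) s (s + 1))) => {s}.
  move=> s /=; rewrite J_shift; apply: J_ext => u.
  by have := vx_shift t u 1; rewrite mulr1z.
move=> r h0 h1 /=; rewrite add0r (@J_split t _ r 1 (r + 1) (ltW h1)); last lra.
rewrite -{2}[1](add0r 1) J_shift.
rewrite (@J_ext t _ (vx t) _ _); last by move=> u; have := vx_shift t u 1; rewrite mulr1z.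
by rewrite addrC -J_split // ltW.
Qed.

Lemma A_step t s : A t (vx t) (s + 1) = A t (vx t) s + J t (vx t) 0 1.
Proof.
have hs : s <= s + 1 by lra.
have := @A_diff t (vx t) _ _ hs.
rewrite P_const; lra.
Qed.

Lemma Q_eq t s : J t (vy t) s (s + 1) = A t (vx t) s + J t (vy t) 0 1.
Proof.
suff : (fun s => J t (vy t) s (s + 1) - A t (vx t) s) s =
       (fun s => J t (vy t) s (s + 1) - A t (vx t) s) 0.
  by rewrite /= add0r {2}/A lexx J_nil subr0 => <-; ring.
apply: (@per_frac (fun s => J t (vy t) s (s + 1) - A t (vx t) s)) => {s}.
  move=> s /=; rewrite A_step J_shift.
  rewrite (@J_ext t _ (fun u => vy t u + vx t u) _ _); last first.
    by move=> u; have := vy_shift t u 1; rewrite mulr1z mul1r.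
  rewrite J_add P_const; ring.
move=> r h0 h1 /=; rewrite add0r (@J_split t _ r 1 (r + 1) (ltW h1)); last lra.
rewrite -{2}[1](add0r 1) J_shift.
rewrite (@J_ext t (fun u => vy t (u + 1)) (fun u => vy t u + vx t u) _ _); last first.
  by move=> u; have := vy_shift t u 1; rewrite mulr1z mul1r.
rewrite J_add /A h0 lexx J_nil (@J_split t (vy t) 0 r 1 h0 (ltW h1)); ring.
Qed.
Definition PL t : seq (nat * nat) := [seq (x, y) | x <- iota 1 t, y <- iota 1 t].
Definition Qp (p : nat * nat) : bool := (p.2 <= p.1)%N && coprime p.1 p.2.

Lemma Ht_PL t : ((Ht t)%:R : rat) = \sum_(p <- PL t | Qp p) ((t %/ p.1 * p.1)%N%:R : rat).
Proof.
rewrite /Ht natr_sum [RHS]big_mkcond big_allpairs.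
rewrite /index_iota subn1 /=.
apply: eq_big_seq => x; rewrite mem_iota => /andP[hx1 hx2].
rewrite natr_sum (big_nat_widen _ _ t.+1); last by lia.
rewrite big_mkcond /index_iota subn1 /=.
apply: eq_big_seq => y; rewrite mem_iota => /andP[hy1 hy2].
rewrite /Qp /= ltnS; case: (y <= x)%N; by rewrite ?andbT ?andbF.
Qed.

Definition gp (p : nat * nat) : rat := ((p.1 - p.2)%N%:R / p.1%:R).

Lemma cop_sub n x : (n <= x)%N -> coprime (x - n) x = coprime n x.
Proof.
move=> hn; set m := (x - n)%N; have -> : x = (m + n)%N by rewrite /m subnK.
rewrite /coprime gcdnDl gcdnC addnC gcdnDl.
by [].
Qed.

Lemma gp_frac p : Qp p -> (1 <= p.1)%N ->
  numq (gp p) = (p.1 - p.2)%N /\ denq (gp p) = p.1.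
Proof.
case: p => x y; rewrite /Qp /= => /andP[hyx hc] hx.
have hc' : coprime `|Posz (x - y)%N| `|Posz x| by rewrite /= cop_sub // coprime_sym.
have E : gp (x, y) = (Posz (x - y)%N)%:~R / (Posz x)%:~R by [].
rewrite E coprimeq_num // coprimeq_den //.
have -> : (Posz x == 0) = false by apply/negbTE; rewrite -lt0n.
by rewrite gtr0_sg ?mul1r //; rewrite ltz_nat.
Qed.

Lemma vx_gp t p : Qp p -> (1 <= p.1)%N -> vx t (gp p) = ((t %/ p.1 * p.1)%N%:R : rat).
Proof.
move=> hq h1; rewrite /vx /vcoef (@gp_frac p hq h1).2 natrM.
by [].
Qed.

Lemma J_Ht t : (1 <= t)%N -> J t (vx t) 0 1 = (Ht t)%:R.
Proof.
move=> ht; rewrite Ht_PL -big_filter.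
rewrite (eq_big_seq (fun p => vx t (gp p))); last first.
  move=> p; rewrite mem_filter => /andP[hq hp]; rewrite vx_gp //.
  by move: hp => /allpairsP[[x y] [hx hy ->]]; rewrite mem_iota in hx; case/andP: hx.
rewrite -(big_map gp xpredT (vx t)) /J -[LHS]big_filter.
apply: perm_big; apply: uniq_perm.
- by rewrite filter_uniq // undup_uniq.
- rewrite map_inj_in_uniq.
    rewrite filter_uniq // allpairs_uniq ?iota_uniq //.
    by move=> [a b] [c d].
  move=> [x y] [x' y']; rewrite !mem_filter => /andP[hq hp] /andP[hq' hp'] E.
  have hx : (1 <= x)%N.
    by move: hp => /allpairsP[[a b] [ha hb [-> _]]]; rewrite mem_iota in ha; case/andP: ha.
  have hx' : (1 <= x')%N.
    by move: hp' => /allpairsP[[a b] [ha hb [-> _]]]; rewrite mem_iota in ha; case/andP: ha.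
  have [n1 d1] := @gp_frac _ hq hx; have [n2 d2] := @gp_frac _ hq' hx'.
  rewrite E in n1 d1; rewrite n1 in n2; rewrite d1 in d2.
  move: hq hq'; rewrite /Qp /= => /andP[h1 _] /andP[h2 _].
  move: n2 d2 => /eqP; rewrite eqz_nat => /eqP n2 /eqP; rewrite eqz_nat => /eqP d2.
  move: n2 d2 => /= n2 d2; subst x'; congr (_, _); lia.
move=> u; rewrite mem_filter mem_Sbox; apply/idP/mapP.
  case/andP=> /andP[hu0 hu1] /andP[hS _].
  have hd := denq_gt0 u.
  have hn0 : 0 <= numq u by rewrite numq_ge0.
  have hnd : numq u < denq u.
    rewrite -(ltr_int rat) numqE; rewrite -[X in _ < X]mul1r ltr_pM2r //.
    by rewrite ltr0z.
  exists (absz (denq u), (absz (denq u) - absz (numq u))%N).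
    rewrite mem_filter; apply/andP; split.
      rewrite /Qp /= leq_subr /= coprime_sym cop_sub; last by lia.
      exact: coprime_num_den.
    apply/allpairsP; exists (absz (denq u), (absz (denq u) - absz (numq u))%N) => /=.
    rewrite !mem_iota; rewrite /inS in hS; split => //; lia.
  rewrite /gp /= subKn; last by lia.
  rewrite -[((absz (numq u))%:R)]/(((absz (numq u))%:Z)%:~R : rat) gez0_abs //.
  rewrite -[((absz (denq u))%:R)]/(((absz (denq u))%:Z)%:~R : rat) gez0_abs ?ltW //.
  by rewrite divq_num_den.
case=> p; rewrite mem_filter => /andP[hq hp] ->.
have [x [y [hx hy Ep]]] : exists x y, [/\ (1 <= x <= t)%N, (1 <= y <= t)%N & p = (x, y)].
  move: hp => /allpairsP[[a b] [ha hb ->]]; exists a, b.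
  by rewrite !mem_iota in ha hb; split => //; lia.
subst p.
have [n1 d1] := @gp_frac _ hq (proj1 (andP hx)).
move: (hq); rewrite /Qp /= => /andP[hyx _].
have hx0 : (0 < x%:R :> rat) by rewrite ltr0n; lia.
have hu0 : 0 <= gp (x, y) by rewrite /gp /= divr_ge0.
have hu1 : gp (x, y) < 1.
  by rewrite /gp /= ltr_pdivrMr // mul1r ltr_nat; lia.
rewrite hu0 hu1 /= /inS d1 lez_nat (proj2 (andP hx)) /=.
apply: bndI; first by rewrite /inS d1 lez_nat (proj2 (andP hx)).
by rewrite hu0 ltW.
Qed.

Lemma bnd_s t s u : inS t u -> (`|u| <= `|s|) -> `|numq u| <= (bnd t s)%:Z.
Proof.
move=> hS hu; apply: bnd_gen => //; apply: (le_trans hu); exact: absq_le.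
Qed.

Lemma split0 t K (f : rat -> rat) c : (1 <= t)%N ->
  \sum_(u <- Sbox t K | (0 <= u) && (u < c)) f u =
  (if 0 < c then f 0 else 0) + \sum_(u <- Sbox t K | (0 < u) && (u < c)) f u.
Proof.
move=> ht; case: (ltP 0 c) => hc.
  rewrite -big_filter (bigD1_seq 0).
  - rewrite big_filter_cond; congr (_ + _); apply: eq_bigl => u.
    by case: (eqVneq u 0) => [->|hu]; rewrite ?ltxx ?andbF ?andbT // [0 < u]lt_def hu.
  - rewrite mem_filter lexx hc mem_Sbox /inS denq0 numq0 /=; lia.
  - by rewrite filter_uniq // undup_uniq.
rewrite add0r; apply: eq_bigl => u.
case: (lerP 0 u) => h; rewrite /= ?andbF //=.
  have hn : ~~ (u < c) by rewrite -leNgt (le_trans hc h).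
  by rewrite (negbTE hn) andbF.
have hn : ~~ (0 < u) by rewrite -leNgt ltW.
by rewrite (negbTE hn).
Qed.

Lemma startx_A t s : (1 <= t)%N -> startx t s = - (t%:R / 2) + A t (vx t) s.
Proof.
move=> ht; rewrite /startx /A.
case: (ltP 0 s) => hs.
  rewrite (ltW hs).
  rewrite /J (@reK t _ (vx t) (bnd t s) (B t 0 s)); first last.
  - move=> u hS /andP[h1 h2]; apply: bnd_s => //.
    by rewrite ger0_norm ?ltW // ger0_norm ?ltW // ltW.
  - by move=> u hS /andP[h1 h2]; apply: bndI => //; rewrite ltW // ltW.
  rewrite split0 // hs vx0; lra.
case: (eqVneq s 0) => [->|hs0].
  rewrite lexx J_nil addr0 big1 ?subr0 // => u /andP[h1 h2].
  by move: (le_lt_trans h1 h2); rewrite ltxx.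
have hs' : s < 0 by rewrite lt_neqAle hs0 hs.
rewrite leNgt hs' /=.
rewrite /J (@reK t _ (vx t) (bnd t s) (B t s 0)); first last.
- move=> u hS /andP[h1 h2]; apply: bnd_s => //.
  by rewrite ltr0_norm // ltr0_norm // lerN2.
- by move=> u hS /andP[h1 h2]; apply: bndI => //; rewrite h1 ltW.
lra.
Qed.

Lemma starty_A t s : (1 <= t)%N -> starty t s = A t (vy t) s.
Proof.
move=> ht; rewrite /starty /A.
case: (ltP 0 s) => hs.
  rewrite (ltW hs).
  rewrite /J (@reK t _ (vy t) (bnd t s) (B t 0 s)); first last.
  - move=> u hS /andP[h1 h2]; apply: bnd_s => //.
    by rewrite ger0_norm ?ltW // ger0_norm ?ltW // ltW.
  - by move=> u hS /andP[h1 h2]; apply: bndI => //; rewrite ltW // ltW.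
  rewrite split0 // hs vy0; ring.
case: (eqVneq s 0) => [->|hs0].
  rewrite lexx J_nil big1 ?oppr0 // => u /andP[h1 h2].
  by move: (le_lt_trans h1 h2); rewrite ltxx.
have hs' : s < 0 by rewrite lt_neqAle hs0 hs.
rewrite leNgt hs' /=.
rewrite /J (@reK t _ (vy t) (bnd t s) (B t s 0)); first last.
- move=> u hS /andP[h1 h2]; apply: bnd_s => //.
  by rewrite ltr0_norm // ltr0_norm // lerN2.
- by move=> u hS /andP[h1 h2]; apply: bndI => //; rewrite h1 ltW.
by [].
Qed.

Lemma startx_step t s : (1 <= t)%N -> startx t (s + 1) = startx t s + (Ht t)%:R.
Proof. by move=> ht; rewrite !startx_A // A_step J_Ht // addrA. Qed.

Lemma starty_step t s : (1 <= t)%N ->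
  starty t (s + 1) = starty t s + startx t s + (Ht t)%:R / 2.
Proof.
move=> ht; rewrite !starty_A // startx_A //.
have hs : s <= s + 1 by lra.
have := @A_diff t (vy t) _ _ hs; rewrite Q_eq Jvy01 // J_Ht //.
lra.
Qed.

Lemma Jvy_int t : exists z : int, J t (vy t) 0 1 = z%:~R.
Proof.
exists (\sum_(u <- Sbox t (B t 0 1) | (0 <= u) && (u < 1)) ((vcoef t u)%:Z * numq u)).
by rewrite /J rmorph_sum; apply: eq_bigr => u _ /=; rewrite /vy rmorphM /=.
Qed.

Lemma Ht_par t : (1 <= t)%N -> exists z : int, ((Ht t)%:R : rat) = t%:R + 2 * z%:~R.
Proof.
move=> ht; have [z hz] := Jvy_int t; exists z.
rewrite -hz Jvy01 // J_Ht //; lra.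
Qed.

Lemma Ht_pos t : (1 <= t)%N -> (0 < Ht t)%N.
Proof.
move=> ht; rewrite -(ltr0n rat) -J_Ht // J01 // vx0.
have : 0 <= Jo t (vx t) 0 1.
  apply: sumr_ge0 => u _; rewrite /vx mulr_ge0 // ler0z ltW // denq_gt0.
have : (0 < t%:R :> rat) by rewrite ltr0n.
lra.
Qed.

Lemma vx1 t s : vx t (s + 1) = vx t s.
Proof. by have := vx_shift t s 1; rewrite mulr1z. Qed.
Lemma vy1 t s : vy t (s + 1) = vy t s + vx t s.
Proof. by have := vy_shift t s 1; rewrite mulr1z mul1r. Qed.
Lemma inS1 t s : inS t (s + 1) = inS t s.
Proof. by have := inS_shift t s 1; rewrite mulr1z. Qed.

Theorem lemma1 (R : realFieldType) (t : nat) (ht : (1 <= t)%N) :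
  maps_onto (Tmap R t) (lattice R t) /\
  maps_onto (Tmap R t) (gridP R t) /\
  (forall c : R, maps_onto (Tmap R t) (refpar R t c)).
Proof.
have [z hz] := @Ht_par t ht.
have hzR : ((Ht t)%:R : R) = t%:R + 2 * z%:~R.
  by have := congr1 (@ratr R) hz; rewrite rmorphD rmorphM /= !ratr_nat ratr_int.
have hH0 : ((Ht t)%:R : R) != 0 by rewrite pnatr_eq0 -lt0n Ht_pos.
split; [|split].
- split.
    move=> p [m [n ->]]; rewrite /Tmap /=.
    exists (m + t%:Z + 2 * z), (n + m + t%:Z + z).
    rewrite hzR !intrD !intrM /=; congr (_, _); lra.
  move=> q [m [n ->]].
  exists (t%:R / 2 + (m - t%:Z - 2 * z)%:~R, (n - m + z)%:~R).
    by exists (m - t%:Z - 2 * z), (n - m + z).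
  rewrite /Tmap hzR !(intrD, intrN, intrM) /=; congr (_, _); lra.
- split.
    move=> p [s [hS [l hl ->]]]; exists (s + 1); split; first by rewrite inS1.
    exists l => //; rewrite /Tmap /= vx1 vy1 startx_step // starty_step //.
    rewrite !rmorphD /= [ratr (_ / 2)]rmorphM /= fmorphV /= !ratr_nat.
    congr (_, _); ring.
  move=> q [s [hS [l hl ->]]].
  have [s' Es] : exists s', s = s' + 1 by exists (s - 1); rewrite subrK.
  subst s; rewrite inS1 in hS.
  exists (ratr (startx t s') + l * ratr (vx t s'),
          ratr (starty t s') + l * ratr (vy t s')).
    by exists s'; split => //; exists l.
  rewrite /Tmap /= vx1 vy1 startx_step // starty_step //.
  rewrite !rmorphD /= [ratr (_ / 2)]rmorphM /= fmorphV /= !ratr_nat.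
  congr (_, _); ring.
move=> c; split.
  move=> p; rewrite /refpar /Tmap /= => ->; field.
  by [].

move=> q hq.
exists (q.1 - (Ht t)%:R, q.2 - (q.1 - (Ht t)%:R) - (Ht t)%:R / 2).
  rewrite /refpar /= hq; field.
  by [].
rewrite /Tmap /=; case: q hq => a b /= _; congr (_, _); ring.
Qed.
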